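(* Assume the standing assumptions and additionally that every $\sigma_l$ is differentiable everywhere, and let $\Omega=\Omega_{in}$ with $\lambda>0$, $1\le p<\infty$. Then for every $B\in\mathbb{R}$, the set of dimension tuples $\mathbf{d}=(d_1,\dots,d_{L-1})$ for which there exists a proper $B$-local minimum $(\mathbf{d},\mathbf{W})$ of $E$ is bounded.
   Context: Network: for dimensions $d_0,\dots,d_L$ and weights $\mathbf{W}=(W_1,\dots,W_L)$, $W_l\in\mathbb{R}^{d_{l-1}\times d_l}$, define for a row vector $x\in\mathbb{R}^{d_0}$: $x_0=x$, $z_l=x_{l-1}W_l$, $x_l=\sigma_l.(z_l)$ (elementwise), $f(\mathbf{W},x)=x_L$; $d_0,d_L$ are fixed and $d_1,\dots,d_{L-1}$ vary. $E(\mathbf{d},\mathbf{W})=\frac{1}{|D|}\sum_{(x,y)\in D}e(f(\mathbf{W},x),y)+\Omega(\mathbf{W},\lambda,p)$ with $D$ a finite dataset of pairs $(x,y)$, $x\in\mathbb{R}^{d_0}$, $y\in Y$. $\Omega_{in}(\mathbf{W},\lambda,p)=\lambda\sum_{l=1}^L\sum_{j=1}^{d_l}\|(W_l(i,j))_{i}\|_p$, $\Omega_{out}(\mathbf{W},\lambda,p)=\lambda\sum_{l=1}^L\sum_{i=1}^{d_{l-1}}\|(W_l(i,j))_{j}\|_p$. Standing assumptions: each $\sigma_l$ is left- and right-differentiable everywhere, and there are functions $b_{1,l},b_{2,l}:\mathbb{R}_{\ge0}\to\mathbb{R}_{\ge0}$ with $|\sigma_l(s)|\le b_{1,l}(S)|s|$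 and $|\sigma_l^{\leftarrow}(s)|,|\sigma_l^{\rightarrow}(s)|\le b_{2,l}(S)$ whenever $|s|\le S$; $e$ is nonnegative, differentiable in its first argument, and there is $b_3$ with $e(v,y)\le S\Rightarrow\|\partial e(v,y)/\partial v\|_\infty\le b_3(S)$. Definitions: The fan-in of hidden unit $j$ in layer $l$ ($1\le l\le L-1$) is column $j$ of $W_l$; its fan-out is row $j$ of $W_{l+1}$. A pair $(\mathbf{d},\mathbf{W})$ is a local minimum of $E$ if $\mathbf{W}$ is a local minimum of $E(\mathbf{d},\cdot)$ with $\mathbf{d}$ fixed; it is $B$-locally minimal if moreover $E(\mathbf{d},\mathbf{W})\le B$. The proper dimensionality of $\mathbf{W}$ is the dimension tuple obtained by deleting all hidden units whose fan-in or fan-out (or both) is the zero vector; $(\mathbf{d},\mathbf{W})$ is proper if $\mathbf{d}$ equals the proper dimensionality of $\mathbf{W}$ (i.e. no hidden unit has zero fan-in or zero fan-out). A proper $B$-local minimum is a $B$-locally minimal local minimum that is proper. *)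

(* Defs.v *)
From Stdlib Require Import Reals.
From mathcomp Require Import ssreflect ssrfun ssrbool eqtype ssrnat seq fintype bigop.

Set Implicit Arguments.
Unset Strict Implicit.
Unset Printing Implicit Defensive.

(** * Conventions
  Layers are numbered 0..L.  [d : nat -> nat] gives the hidden widths
  d_1,...,d_{L-1} (its values outside 1..L-1 are irrelevant); the full width of
  layer l is [dim d0 dL L d l] (= d0 at l=0, dL at l=L).
  Weights: [W : nat -> nat -> nat -> R], [W l i j] = W_l(i,j) for
  1 <= l <= L, i < dim (l-1), j < dim l; other entries are never used. *)

Definition dim (d0 dL L : nat) (d : nat -> nat) (l : nat) : nat :=
  if l == 0 then d0 else if l == L then dL else d l.

Fixpoint act (sigma : nat -> R -> R) (dm : nat -> nat)
    (W : nat -> nat -> nat -> R) (x0 : nat -> R) (l : nat) : nat -> R :=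
  match l with
  | 0 => x0
  | k.+1 => fun j =>
      sigma k.+1 (\big[Rplus/0%R]_(i < dm k) (act sigma dm W x0 k i * W k.+1 i j)%R)
  end.

Definition xin (d0 : nat) (x : 'I_d0 -> R) : nat -> R :=
  fun i => oapp x 0%R (insub i : option 'I_d0).

Definition fnet (sigma : nat -> R -> R) (d0 dL L : nat) (d : nat -> nat)
    (W : nat -> nat -> nat -> R) (x : 'I_d0 -> R) : 'I_dL -> R :=
  fun j => act sigma (dim d0 dL L d) W (xin x) L (nat_of_ord j).

(** |a|^q for real q > 0 (with 0^q = 0; Stdlib's Rpower 0 q is 1) *)
Definition rpow (a q : R) : R :=
  if Req_EM_T a 0 then 0%R else Rpower (Rabs a) q.

Definition fanin_pnorm (p : R) (dm : nat -> nat) (W : nat -> nat -> nat -> R)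
    (l j : nat) : R :=
  rpow (\big[Rplus/0%R]_(i < dm l.-1) rpow (W l i j) p) (/ p).

Definition Omega_in (lambda p : R) (L : nat) (dm : nat -> nat)
    (W : nat -> nat -> nat -> R) : R :=
  (lambda * \big[Rplus/0%R]_(1 <= l < L.+1)
              \big[Rplus/0%R]_(j < dm l) fanin_pnorm p dm W l j)%R.

Definition Eobj (Y : Type) (sigma : nat -> R -> R) (d0 dL L : nat)
    (e : ('I_dL -> R) -> Y -> R) (D : seq (('I_d0 -> R) * Y)) (lambda p : R)
    (d : nat -> nat) (W : nat -> nat -> nat -> R) : R :=
  (/ INR (size D) * \big[Rplus/0%R]_(xy <- D) e (@fnet sigma d0 dL L d W xy.1) xy.2
   + Omega_in lambda p L (dim d0 dL L d) W)%R.

(** (d, W) is a local minimum: W is a local minimum of E(d, .) (the neighbourhood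
    is a sup-norm ball over the actual weight entries) *)
Definition local_min (Y : Type) (sigma : nat -> R -> R) (d0 dL L : nat)
    (e : ('I_dL -> R) -> Y -> R) (D : seq (('I_d0 -> R) * Y)) (lambda p : R)
    (d : nat -> nat) (W : nat -> nat -> nat -> R) : Prop :=
  exists eps : R, (0 < eps)%R /\
    forall W' : nat -> nat -> nat -> R,
      (forall l i j, (1 <= l <= L)%N -> (i < dim d0 dL L d l.-1)%N ->
         (j < dim d0 dL L d l)%N -> (Rabs (W' l i j - W l i j) < eps)%R) ->
      (@Eobj Y sigma d0 dL L e D lambda p d W <= @Eobj Y sigma d0 dL L e D lambda p d W')%R.

(** (d, W) is proper: no hidden unit has zero fan-in (column j of W_l) or zero
    fan-out (row j of W_{l+1}) *)
Definition proper (d0 dL L : nat) (d : nat -> nat) (W : nat -> nat -> nat -> R)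
    : Prop :=
  forall l j, (1 <= l <= L.-1)%N -> (j < d l)%N ->
    (exists i, (i < dim d0 dL L d l.-1)%N /\ W l i j <> 0%R) /\
    (exists k, (k < dim d0 dL L d l.+1)%N /\ W l.+1 j k <> 0%R).

Definition proper_B_local_min (Y : Type) (sigma : nat -> R -> R) (d0 dL L : nat)
    (e : ('I_dL -> R) -> Y -> R) (D : seq (('I_d0 -> R) * Y)) (lambda p B : R)
    (d : nat -> nat) (W : nat -> nat -> nat -> R) : Prop :=
  @local_min Y sigma d0 dL L e D lambda p d W /\
  (@Eobj Y sigma d0 dL L e D lambda p d W <= B)%R /\
  proper d0 dL L d W.

Definition right_deriv (f : R -> R) (x l : R) : Prop :=
  forall eps : R, (0 < eps)%R -> exists delta : R, (0 < delta)%R /\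
    forall h : R, (0 < h < delta)%R -> (Rabs ((f (x + h) - f x) / h - l) < eps)%R.
Definition left_deriv (f : R -> R) (x l : R) : Prop :=
  forall eps : R, (0 < eps)%R -> exists delta : R, (0 < delta)%R /\
    forall h : R, (- delta < h < 0)%R -> (Rabs ((f (x + h) - f x) / h - l) < eps)%R.

Definition supnorm (n : nat) (v : 'I_n -> R) : R :=
  \big[Rmax/0%R]_(i < n) Rabs (v i).

Definition frechet_grad (n : nat) (F : ('I_n -> R) -> R) (v g : 'I_n -> R)
    : Prop :=
  forall eps : R, (0 < eps)%R -> exists delta : R, (0 < delta)%R /\
    forall h : 'I_n -> R, (supnorm h < delta)%R ->
      (Rabs (F (fun i => v i + h i)%R - F v - \big[Rplus/0%R]_(i < n) (g i * h i))
        <= eps * supnorm h)%R.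

(* Main.v *)
Require Import Defs.
From Stdlib Require Import Reals Lra Lia ZArith FunctionalExtensionality.
From mathcomp Require Import ssreflect ssrfun ssrbool eqtype ssrnat seq fintype bigop.
From mathcomp Require Import zify.
From HB Require Import structures.
Set Warnings "-notation-overridden -redundant-canonical-projection".
Open Scope R_scope.


Lemma Rplus_assoc' : associative Rplus. Proof. move=> *; by rewrite Rplus_assoc. Qed.
HB.instance Definition _ := Monoid.isComLaw.Build R 0%R Rplus Rplus_assoc' Rplus_comm Rplus_0_l.

Section Sums.
Variable I : Type.
Implicit Types (r : seq I) (P : pred I) (F G : I -> R).

Lemma sum_le r P F G : (forall i, P i -> F i <= G i) ->
  \big[Rplus/0]_(i <- r | P i) F i <= \big[Rplus/0]_(i <- r | P i) G i.
Proof. move=> H; apply: (big_ind2 (fun x y => x <= y)) => //; [lra| move=> *; lra]. Qed.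

Lemma sum_ge0 r P F : (forall i, P i -> 0 <= F i) -> 0 <= \big[Rplus/0]_(i <- r | P i) F i.
Proof. move=> H; apply: (big_ind (fun x => 0 <= x)) => //; [lra| move=> *; lra]. Qed.

Lemma sum_abs r P F : Rabs (\big[Rplus/0]_(i <- r | P i) F i) <= \big[Rplus/0]_(i <- r | P i) Rabs (F i).
Proof.
apply: (big_ind2 (fun x y => Rabs x <= y)).
- rewrite Rabs_R0; lra.
- move=> x1 x2 y1 y2 h1 h2; apply: Rle_trans (Rabs_triang _ _) _; lra.
- move=> *; lra.
Qed.

Lemma sumZ r P F c : \big[Rplus/0]_(i <- r | P i) (c * F i) = c * \big[Rplus/0]_(i <- r | P i) F i.
Proof.
apply: (big_ind2 (fun x y => x = c * y)); [ring | move=> ? ? ? ? -> ->; ring | done].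
Qed.

Lemma sumB r P F G : \big[Rplus/0]_(i <- r | P i) (F i - G i) =
  \big[Rplus/0]_(i <- r | P i) F i - \big[Rplus/0]_(i <- r | P i) G i.
Proof.
elim: r => [|a r IH]; rewrite ?big_nil ?big_cons; first ring.
case: (P a); rewrite IH; ring.
Qed.

Lemma sum_In r F a : (forall i, 0 <= F i) -> List.In a r -> F a <= \big[Rplus/0]_(i <- r) F i.
Proof.
move=> H; elim: r => [|b r IH] //= [<-|h]; rewrite big_cons.
- have := sum_ge0 r (fun _ => true) F (fun i _ => H i). lra.
- have := IH h. have := H b. lra.
Qed.

Lemma sum_bound_list r F G Q : (forall a, List.In a r -> Rabs (F a - G a) <= Q) ->
  \big[Rplus/0]_(i <- r) F i - \big[Rplus/0]_(i <- r) G i <= INR (size r) * Q.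
Proof.
elim: r => [|b r IH] H; rewrite ?big_nil ?big_cons; first (simpl; lra).
have h1 := H b (or_introl erefl).
have h2 := IH (fun a h => H a (or_intror h)).
have -> : size (b :: r) = (size r).+1 by []. rewrite S_INR. have := Rle_abs (F b - G b). lra.
Qed.
End Sums.

Lemma sum_nat_In (r : seq nat) (F : nat -> R) a : (forall i, 0 <= F i) -> a \in r ->
  F a <= \big[Rplus/0]_(i <- r) F i.
Proof.
move=> H; elim: r => [|b r IH] //; rewrite inE big_cons => /orP [/eqP ->|h].
- have := @sum_ge0 _ r (fun _ => true) F (fun i _ => H i). lra.
- have := IH h. have := H b. lra.
Qed.

Lemma sum_ord_term n (F : nat -> R) j : (j < n)%N -> (forall i, (i < n)%N -> 0 <= F i) ->
  F j <= \big[Rplus/0]_(i < n) F i.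
Proof.
move=> hj H; rewrite (bigD1 (Ordinal hj)) //=.
rewrite -[X in X <= _]Rplus_0_r; apply: Rplus_le_compat_l; apply: sum_ge0 => i _; exact: H (ltn_ord i).
Qed.

Lemma sum_ord_single n (F : nat -> R) j : (j < n)%N -> (forall i, (i < n)%N -> i <> j -> F i = 0) ->
  \big[Rplus/0]_(i < n) F i = F j.
Proof.
move=> hj H; rewrite (bigD1 (Ordinal hj)) //= big1 ?Rplus_0_r //.
move=> i /eqP hi; apply: (H _ (ltn_ord i)).
move=> e; apply: hi; apply: val_inj; exact: e.
Qed.

Lemma sum_const_ord n c : \big[Rplus/0]_(i < n) c = INR n * c.
Proof. rewrite big_const_ord; elim: n => [|n IH]; first (simpl; ring).
change (iter n.+1 (Rplus c) 0) with (c + iter n (Rplus c) 0); rewrite IH S_INR; ring. Qed.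



Lemma Rpower_pos x y : 0 < Rpower x y.
Proof. exact: exp_pos. Qed.

Lemma rpow_ge0 a q : 0 <= rpow a q.
Proof. rewrite /rpow; case: (Req_EM_T a 0) => h /=; first lra. have := Rpower_pos (Rabs a) q; lra. Qed.

Lemma rpow_nz a q : a <> 0 -> rpow a q = Rpower (Rabs a) q.
Proof. rewrite /rpow; by case: (Req_EM_T a 0). Qed.

Lemma rpow_scale c a q : 0 < c -> rpow (c * a) q = Rpower c q * rpow a q.
Proof.
move=> hc; rewrite /rpow; case: (Req_EM_T (c * a) 0) => h1; case: (Req_EM_T a 0) => h2 /=.
- ring.
- exfalso; apply: h2; have : c <> 0 by lra. move=> hc0; by case: (Rmult_integral _ _ h1) => //.
- exfalso; apply: h1; rewrite h2; ring.
- rewrite Rabs_mult (Rabs_pos_eq c) ?Rpower_mult_distr //; try lra.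
  have := Rabs_pos a. have := Rabs_pos_lt a h2. lra.
Qed.

Lemma Rpower_inv_p A p : 0 < A -> 0 < p -> Rpower (Rpower A (/ p)) p = A.
Proof. move=> hA hp; rewrite Rpower_mult Rinv_l ?Rpower_1 //; lra. Qed.

Lemma Rpower_p_inv A p : 0 < A -> 0 < p -> Rpower (Rpower A p) (/ p) = A.
Proof. move=> hA hp; rewrite Rpower_mult Rinv_r ?Rpower_1 //; lra. Qed.

Lemma pow_mvt a b p : 0 < b <= a -> 1 <= p ->
  Rpower a p - Rpower b p <= p * Rpower a (p - 1) * (a - b).
Proof.
move=> hab hp; case: (Req_dec b a) => [->|hne]; first (have := Rpower_pos a (p-1); nra).
have hlt : b < a by lra.
have [c [hc1 hc2]] := MVT_cor2 (fun x => Rpower x p) (fun x => p * Rpower x (p - 1)) b a hlt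
  (fun c hc => derivable_pt_lim_power c p (ltac:(lra))).
rewrite hc1.
have : Rpower c (p-1) <= Rpower a (p-1) by apply: Rle_Rpower_l; lra.
move=> h; apply: Rmult_le_compat_r; [lra|]; apply: Rmult_le_compat_l; lra.
Qed.

Lemma pow_shrink t p : 0 < t < 1 -> 1 <= p -> Rpower (1 - t) p <= 1 - t.
Proof.
move=> ht hp; rewrite /Rpower.
have hl : ln (1 - t) < 0 by rewrite -ln_1; apply: ln_increasing; lra.
have : p * ln (1 - t) <= 1 * ln (1 - t) by nra.
rewrite Rmult_1_l => h.
case: (Rle_lt_or_eq_dec _ _ h) => [h'|->]; last by rewrite exp_ln; lra.
have := exp_increasing _ _ h'. rewrite exp_ln; lra.
Qed.

Lemma Rpower_le_exp_base a b q : 0 <= q -> 0 < a <= b -> Rpower a q <= Rpower b q.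
Proof. move=> *; exact: Rle_Rpower_l. Qed.

Definition normc (p : R) (n : nat) (c : nat -> R) : R :=
  rpow (\big[Rplus/0]_(i < n) rpow (c i) p) (/ p).

Lemma normc_ge0 p n c : 0 <= normc p n c.
Proof. exact: rpow_ge0. Qed.

Lemma sum_rpow_ge0 p n c : 0 <= \big[Rplus/0]_(i < n) rpow (c i) p.
Proof. apply: sum_ge0 => *; exact: rpow_ge0. Qed.

Lemma entry_le_normc p n c i : 1 <= p -> (i < n)%N -> Rabs (c i) <= normc p n c.
Proof.
move=> hp hi; case: (Req_dec (c i) 0) => [->|hz].
  rewrite Rabs_R0; exact: normc_ge0.
have h1 : rpow (c i) p <= \big[Rplus/0]_(i < n) rpow (c i) p.
  exact: (@sum_ord_term n (fun i => rpow (c i) p) i hi (fun i _ => rpow_ge0 _ _)).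
have hca : 0 < Rabs (c i) by apply: Rabs_pos_lt.
rewrite rpow_nz // in h1.
have hA : 0 < \big[Rplus/0]_(i < n) rpow (c i) p by have := Rpower_pos (Rabs (c i)) p; lra.
rewrite /normc rpow_nz; last by lra.
rewrite [Rabs (\big[_/_]_(_ < _) _)]Rabs_pos_eq; last exact: sum_rpow_ge0.
rewrite -{1}(Rpower_p_inv (Rabs (c i)) p) //; last by lra.
apply: Rle_Rpower_l; [have : 0 < / p by apply: Rinv_0_lt_compat; lra| split]; try lra.
exact: Rpower_pos. exact: h1.
Qed.

Lemma normc_scale p n c s : 1 <= p -> 0 < s -> normc p n (fun i => s * c i) = s * normc p n c.
Proof.
move=> hp hs; rewrite /normc.
under eq_bigr => i _ do rewrite rpow_scale //.
rewrite sumZ rpow_scale ?Rpower_p_inv //; [lra | exact: Rpower_pos].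
Qed.

Lemma normc_shrink p n c c' j t : 1 <= p -> (j < n)%N -> c j <> 0 -> 0 < t < 1 ->
  (forall i, (i < n)%N -> i <> j -> c' i = c i) -> c' j = (1 - t) * c j ->
  t * Rpower (Rabs (c j)) p / (p * Rpower (normc p n c) (p - 1)) <= normc p n c - normc p n c'.
Proof.
move=> hp hj hcj ht hc' hc'j.
have hu : 0 < Rpower (Rabs (c j)) p := Rpower_pos _ _.
set u := Rpower (Rabs (c j)) p in hu *.
have hA : rpow (c j) p <= \big[Rplus/0]_(i < n) rpow (c i) p :=
  @sum_ord_term n (fun i => rpow (c i) p) j hj (fun i _ => rpow_ge0 _ _).
have hA' : rpow (c' j) p <= \big[Rplus/0]_(i < n) rpow (c' i) p :=
  @sum_ord_term n (fun i => rpow (c' i) p) j hj (fun i _ => rpow_ge0 _ _).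
have hdiff : \big[Rplus/0]_(i < n) rpow (c i) p - \big[Rplus/0]_(i < n) rpow (c' i) p
      = rpow (c j) p - rpow (c' j) p.
  rewrite -sumB; apply: (@sum_ord_single n (fun i => rpow (c i) p - rpow (c' i) p)) => // i hi hij.
  rewrite hc' //; ring.
set A := \big[Rplus/0]_(i < n) rpow (c i) p in hA hdiff *.
set A' := \big[Rplus/0]_(i < n) rpow (c' i) p in hA' hdiff *.
have hcj' : rpow (c' j) p = Rpower (1 - t) p * u by rewrite hc'j rpow_scale ?rpow_nz //; lra.
have hcj2 : rpow (c j) p = u by rewrite rpow_nz.
rewrite hcj' hcj2 in hdiff; rewrite hcj2 in hA; rewrite hcj' in hA'.
have hsh := @pow_shrink t p ht hp.
have hpos1 : 0 < Rpower (1 - t) p := Rpower_pos _ _.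
have hA0 : 0 < A by lra.
have hA'0 : 0 < A' by nra.
have hN : normc p n c = Rpower A (/ p).
  rewrite /normc -/A rpow_nz ?Rabs_pos_eq //; lra.
have hN' : normc p n c' = Rpower A' (/ p).
  rewrite /normc -/A' rpow_nz ?Rabs_pos_eq //; lra.
rewrite hN hN'.
have hip : 0 < / p by apply: Rinv_0_lt_compat; lra.
have hsu : Rpower (1 - t) p * u <= (1 - t) * u by apply: Rmult_le_compat_r; lra.
have hle : Rpower A' (/ p) <= Rpower A (/ p) by apply: Rle_Rpower_l; [lra | split; nra].
have hm := @pow_mvt (Rpower A (/ p)) (Rpower A' (/ p)) p (conj (Rpower_pos _ _) hle) hp.
rewrite !Rpower_inv_p in hm; try lra.
have hX : 0 < p * Rpower (Rpower A (/ p)) (p - 1) by have := Rpower_pos (Rpower A (/ p)) (p - 1); nra.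
set X := p * Rpower (Rpower A (/ p)) (p - 1) in hX hm *.
have key : t * u <= X * (Rpower A (/ p) - Rpower A' (/ p)) by nra.
apply: (Rmult_le_reg_l X) => //.
replace (X * (t * u / X)) with (t * u) by (field; lra).
exact: key.
Qed.


Lemma deriv_unique f x g r : derivable_pt_lim f x g -> right_deriv f x r -> g = r.
Proof.
move=> hg hr; case: (Req_dec g r) => // hne; exfalso.
have he : 0 < Rabs (g - r) / 2 by have := Rabs_pos_lt (g - r) (ltac:(lra)); lra.
have [d1 hd1] := hg _ he.
have [d2 [hd2 hd2']] := hr _ he.
have hd1p := cond_pos d1.
set h := Rmin d1 d2 / 2.
have hh : 0 < h by rewrite /h; have := Rmin_glb_lt _ _ _ hd1p hd2; lra.
have hh1 : h < d1 by rewrite /h; have := Rmin_l d1 d2; lra.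
have hh2 : h < d2 by rewrite /h; have := Rmin_r d1 d2; lra.
have := hd1 h (ltac:(lra)) (ltac:(rewrite Rabs_pos_eq; lra)).
have := hd2' h (ltac:(lra)).
set q := (f (x + h) - f x) / h.
move=> h1 h2.
have := Rabs_triang (q - g) (r - q).
replace (q - g + (r - q)) with (-(g - r)) by ring.
rewrite Rabs_Ropp -(Rabs_Ropp (r - q)).
replace (- (r - q)) with (q - r) by ring.
have := Rabs_minus_sym q g. lra.
Qed.

Lemma lip_of_deriv (f fr : R -> R) (bd T u v : R) :
  (forall s, exists g, derivable_pt_lim f s g) ->
  (forall s, right_deriv f s (fr s)) ->
  (forall s, Rabs s <= T -> Rabs (fr s) <= bd) ->
  Rabs u <= T -> Rabs v <= T -> Rabs (f u - f v) <= bd * Rabs (u - v).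
Proof.
move=> hd hr hb hu hv.
have hder : forall s, derivable_pt_lim f s (fr s).
  move=> s; have [g hg] := hd s; by rewrite -(deriv_unique _ _ _ _ hg (hr s)).
have [c [hc1 hc2]] := MVT_abs f fr v u (fun c _ => hder c).
rewrite hc1; apply: Rmult_le_compat_r; first exact: Rabs_pos.
apply: hb.
have hu1 : -T <= u by have := Rle_abs (-u); rewrite Rabs_Ropp; lra.
have hu2 : u <= T by have := Rle_abs u; lra.
have hv1 : -T <= v by have := Rle_abs (-v); rewrite Rabs_Ropp; lra.
have hv2 : v <= T by have := Rle_abs v; lra.
have := Rmin_glb v u (-T) hv1 hu1. have := Rmax_lub v u T hv2 hu2.
move=> h1 h2; apply: Rabs_le; lra.
Qed.

Lemma supnorm_le_sum n (v : 'I_n -> R) : supnorm v <= \big[Rplus/0]_(i < n) Rabs (v i).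
Proof.
rewrite /supnorm.
suff : 0 <= \big[Rmax/0]_(i < n) Rabs (v i) <= \big[Rplus/0]_(i < n) Rabs (v i) by case.
apply: (big_ind2 (fun x y => 0 <= x <= y)).
- lra.
- move=> x1 x2 y1 y2 h1 h2; split.
  + apply: Rle_trans (Rmax_l _ _); lra.
  + apply: Rmax_lub; lra.
- move=> i _; have := Rabs_pos (v i); lra.
Qed.

Lemma abs_le_supnorm n (v : 'I_n -> R) (i : 'I_n) : Rabs (v i) <= supnorm v.
Proof.
rewrite /supnorm.
have : i \in index_enum 'I_n by rewrite mem_index_enum.
elim: (index_enum 'I_n) => [|a r IH] //; rewrite inE big_cons => /orP [/eqP ->|h].
- exact: Rmax_l.
- apply: Rle_trans (Rmax_r _ _); exact: IH.
Qed.

Lemma dot_bound n (g h : 'I_n -> R) :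
  Rabs (\big[Rplus/0]_(i < n) (g i * h i)) <= supnorm g * \big[Rplus/0]_(i < n) Rabs (h i).
Proof.
apply: Rle_trans (sum_abs _ _ _ _) _.
rewrite -sumZ; apply: sum_le => i _.
rewrite Rabs_mult; apply: Rmult_le_compat_r; [exact: Rabs_pos | exact: abs_le_supnorm].
Qed.

Lemma frechet_lip n (F : ('I_n -> R) -> R) v g G0 :
  frechet_grad F v g -> supnorm g <= G0 ->
  exists del, 0 < del /\ forall w, \big[Rplus/0]_(i < n) Rabs (w i - v i) < del ->
    Rabs (F w - F v) <= (G0 + 1) * \big[Rplus/0]_(i < n) Rabs (w i - v i).
Proof.
move=> hF hG; have [del [hdel H]] := hF 1 Rlt_0_1.
exists del; split => // w hw.
set h := fun i => w i - v i.
have hs := @supnorm_le_sum _ h.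
have := H h (ltac:(rewrite /h in hs *; lra)).
have -> : (fun i => v i + h i) = w by apply: functional_extensionality => i; rewrite /h; ring.
have hd := @dot_bound _ g h.
set S := \big[Rplus/0]_(i < n) Rabs (h i) in hs hd *.
set P := \big[Rplus/0]_(i < n) (g i * h i) in hd *.
move=> h1.
have h2 : Rabs (F w - F v) <= Rabs (F w - F v - P) + Rabs P.
  replace (F w - F v) with ((F w - F v - P) + P) at 1 by ring; exact: Rabs_triang.
have hS0 : 0 <= S by apply: sum_ge0 => *; exact: Rabs_pos.
have : supnorm g * S <= G0 * S by apply: Rmult_le_compat_r.
lra.
Qed.

Lemma list_min (T : Type) (r : seq T) (P : T -> R -> Prop) :
  (forall a, List.In a r -> exists tau, 0 < tau /\ forall t, 0 < t < tau -> P a t) ->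
  exists tau, 0 < tau /\ forall t, 0 < t < tau -> forall a, List.In a r -> P a t.
Proof.
elim: r => [|b r IH] H.
  exists 1; split; [lra | by move=> t _ a []].
have [t1 [h1 h1']] := H b (or_introl erefl).
have [t2 [h2 h2']] := IH (fun a h => H a (or_intror h)).
exists (Rmin t1 t2); split; first exact: Rmin_glb_lt.
move=> t ht a [<-|ha].
- apply: h1'; have := Rmin_l t1 t2; lra.
- apply: h2' => //; have := Rmin_r t1 t2; lra.
Qed.


Lemma sum_prod_bound m (a w : nat -> R) c : (forall i, (i < m)%N -> Rabs (w i) <= c) ->
  Rabs (\big[Rplus/0]_(i < m) (a i * w i)) <= \big[Rplus/0]_(i < m) Rabs (a i) * c.
Proof.
move=> H; apply: Rle_trans (sum_abs _ _ _ _) _.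
rewrite Rmult_comm -sumZ; apply: sum_le => i _.
rewrite Rabs_mult Rmult_comm; apply: Rmult_le_compat_r; [exact: Rabs_pos| exact: H (ltn_ord i)].
Qed.

Lemma sum_sum_bound m k (a : nat -> R) (W : nat -> nat -> R) c :
  (forall i, (i < m)%N -> \big[Rplus/0]_(j < k) Rabs (W i j) <= c) ->
  \big[Rplus/0]_(j < k) Rabs (\big[Rplus/0]_(i < m) (a i * W i j))
    <= \big[Rplus/0]_(i < m) Rabs (a i) * c.
Proof.
move=> H.
apply: Rle_trans (_ : \big[Rplus/0]_(j < k) \big[Rplus/0]_(i < m) (Rabs (a i) * Rabs (W i j)) <= _).
  apply: sum_le => j _; apply: Rle_trans (sum_abs _ _ _ _) _.
  apply: sum_le => i _; rewrite Rabs_mult; lra.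
rewrite exchange_big /= Rmult_comm -sumZ; apply: sum_le => i _.
rewrite sumZ Rmult_comm; apply: Rmult_le_compat_r; [exact: Rabs_pos | exact: H (ltn_ord i)].
Qed.

Section Net.
Variables (L d0 dL : nat) (HL : (1 <= L)%N) (sigma : nat -> R -> R) (sigr : nat -> R -> R).
Variables (b1 b2 : nat -> R -> R).
Variable Hsigr : forall l s, (1 <= l <= L)%N -> right_deriv (sigma l) s (sigr l s).
Variable Hb1nn : forall l T, (0 <= T)%R -> (0 <= b1 l T)%R.
Variable Hb2nn : forall l T, (0 <= T)%R -> (0 <= b2 l T)%R.
Variable Hb1 : forall l T s, (1 <= l <= L)%N -> (0 <= T)%R -> (Rabs s <= T)%R ->
           (Rabs (sigma l s) <= b1 l T * Rabs s)%R.
Variable Hb2r : forall l T s, (1 <= l <= L)%N -> (0 <= T)%R -> (Rabs s <= T)%R ->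
           (Rabs (sigr l s) <= b2 l T)%R.
Variable Hdiff : forall l s, (1 <= l <= L)%N -> exists g, derivable_pt_lim (sigma l) s g.
Variables (Y : Type) (e : ('I_dL -> R) -> Y -> R).
Variable Hpos : forall v y, (0 <= e v y)%R.
Variables (b3 : R -> R) (Hb3nn : forall T, (0 <= T)%R -> (0 <= b3 T)%R).
Variable grad_e : ('I_dL -> R) -> Y -> 'I_dL -> R.
Variable Hgrad : forall v y, frechet_grad (fun u => e u y) v (grad_e v y).
Variable Hb3 : forall v y T, (0 <= T)%R -> (e v y <= T)%R -> (supnorm (grad_e v y) <= b3 T)%R.
Variables (D : seq (('I_d0 -> R) * Y)) (lambda p : R) (Hlambda : (0 < lambda)%R) (Hp : (1 <= p)%R).
Variable B : R.

Local Notation dm d := (dim d0 dL L d).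
Local Notation act d W x := (act sigma (dm d) W (xin x)).

Definition step (dm : nat -> nat) (W : nat -> nat -> nat -> R) n (a : nat -> R) : nat -> R :=
  fun j => sigma n (\big[Rplus/0]_(i < dm n.-1) (a i * W n i j)).

Fixpoint fw (dm : nat -> nat) W k m a : nat -> R :=
  match k with 0 => a | k'.+1 => fw dm W k' m.+1 (step dm W m.+1 a) end.

Definition BL := Rabs B / lambda.
Definition Sb := INR (size D) * Rabs B.
Definition X0 := \big[Rplus/0]_(xy <- D) \big[Rplus/0]_(i < d0) Rabs (xy.1 i).

Lemma BL_ge0 : 0 <= BL.
Proof. rewrite /BL; apply: Rmult_le_pos; [exact: Rabs_pos | apply: Rlt_le; exact: Rinv_0_lt_compat]. Qed.
Lemma Sb_ge0 : 0 <= Sb.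
Proof. rewrite /Sb; apply: Rmult_le_pos; [exact: pos_INR | exact: Rabs_pos]. Qed.

Definition Bud d (W : nat -> nat -> nat -> R) :=
  (forall l, (1 <= l <= L)%N -> forall i j, (i < dm d l.-1)%N -> (j < dm d l)%N -> Rabs (W l i j) <= BL) /\
  (forall l, (1 <= l <= L)%N -> forall i, (i < dm d l.-1)%N ->
     \big[Rplus/0]_(j < dm d l) Rabs (W l i j) <= BL).

Definition LB d W := forall xy, List.In xy D -> e (@fnet sigma d0 dL L d W xy.1) xy.2 <= Sb.

Lemma dm0 d : dm d 0 = d0. Proof. by []. Qed.
Lemma dmL d : dm d L = dL.
Proof. rewrite /dim; case: eqP => [h|_]; last by rewrite eqxx. by move: HL; rewrite h. Qed.

Lemma act0_sum d W x : \big[Rplus/0]_(i < dm d 0) Rabs (act d W x 0 i) = \big[Rplus/0]_(i < d0) Rabs (x i).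
Proof. apply: eq_bigr => i _ /=; by rewrite /xin valK. Qed.

Lemma fwd n : (n <= L)%N -> exists X, 0 <= X /\ forall d W, Bud d W -> forall xy, List.In xy D ->
  \big[Rplus/0]_(i < dm d n) Rabs (act d W xy.1 n i) <= X.
Proof.
elim: n => [|n IH] hn.
  exists X0; split.
    apply: sum_ge0 => xy _; apply: sum_ge0 => i _; exact: Rabs_pos.
  move=> d W _ xy hxy; rewrite act0_sum.
  apply: (@sum_In _ D (fun xy => \big[Rplus/0]_(i < d0) Rabs (xy.1 i))) => // a.
  apply: sum_ge0 => i _; exact: Rabs_pos.
have [X [hX H]] := IH (ltnW hn).
have hnL : (1 <= n.+1 <= L)%N by rewrite hn.
exists (b1 n.+1 (X * BL) * (X * BL)); split.
  have hB := BL_ge0. apply: Rmult_le_pos; [apply: Hb1nn|]; apply: Rmult_le_pos => //.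
move=> d W [hB1 hB2] xy hxy.
have HX := H d W (conj hB1 hB2) xy hxy.
set a := act d W xy.1 n.
have hz : forall j, (j < dm d n.+1)%N ->
  Rabs (\big[Rplus/0]_(i < dm d n) (a i * W n.+1 i j)) <= X * BL.
  move=> j hj; apply: Rle_trans (@sum_prod_bound (dm d n) a (fun i => W n.+1 i j) BL _) _.
    move=> i hi; exact: hB1.
  apply: Rmult_le_compat_r => //; exact: BL_ge0.
have hT : 0 <= X * BL by have := BL_ge0; nra.
apply: Rle_trans (_ : \big[Rplus/0]_(j < dm d n.+1)
   (b1 n.+1 (X * BL) * Rabs (\big[Rplus/0]_(i < dm d n) (a i * W n.+1 i j))) <= _).
  apply: sum_le => j _; exact: Hb1 (hz j (ltn_ord j)).
rewrite sumZ; apply: Rmult_le_compat_l; first exact: Hb1nn.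
apply: Rle_trans (@sum_sum_bound (dm d n) (dm d n.+1) a (W n.+1) BL _) _.
  move=> i hi; exact: hB2.
apply: Rmult_le_compat_r => //; exact: BL_ge0.
Qed.


Lemma sig_lip n T u v : (1 <= n <= L)%N -> 0 <= T -> Rabs u <= T -> Rabs v <= T ->
  Rabs (sigma n u - sigma n v) <= b2 n T * Rabs (u - v).
Proof.
move=> hn hT hu hv; apply: (lip_of_deriv (sigma n) (sigr n) (b2 n T) T u v) => //.
- move=> s; exact: Hdiff.
- move=> s; exact: Hsigr.
- move=> s hs; exact: Hb2r.
Qed.

Lemma act_succ d W (x : 'I_d0 -> R) n j : act d W x n.+1 j = step (dm d) W n.+1 (act d W x n) j.
Proof. by []. Qed.

Lemma step_diff d W n (a a' : nat -> R) (X : R) :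
  (1 <= n.+1 <= L)%N -> Bud d W ->
  \big[Rplus/0]_(i < dm d n) Rabs (a i) <= X ->
  BL * \big[Rplus/0]_(i < dm d n) Rabs (a' i - a i) <= 1 ->
  \big[Rplus/0]_(j < dm d n.+1) Rabs (step (dm d) W n.+1 a' j - step (dm d) W n.+1 a j)
   <= b2 n.+1 (X * BL + 1) * (BL * \big[Rplus/0]_(i < dm d n) Rabs (a' i - a i)).
Proof.
move=> hn [hB1 hB2] hX hs.
have hBL := BL_ge0.
have hX0 : 0 <= X by apply: Rle_trans hX; apply: sum_ge0 => *; exact: Rabs_pos.
set s := \big[Rplus/0]_(i < dm d n) Rabs (a' i - a i) in hs *.
have hdz : forall j, \big[Rplus/0]_(i < dm d n) (a' i * W n.+1 i j) -
       \big[Rplus/0]_(i < dm d n) (a i * W n.+1 i j) =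
       \big[Rplus/0]_(i < dm d n) ((a' i - a i) * W n.+1 i j).
  move=> j; rewrite -sumB; apply: eq_bigr => i _; ring.
have hsum : \big[Rplus/0]_(j < dm d n.+1)
     Rabs (\big[Rplus/0]_(i < dm d n) ((a' i - a i) * W n.+1 i j)) <= s * BL.
  apply: (@sum_sum_bound (dm d n) (dm d n.+1) (fun i => a' i - a i) (W n.+1) BL).
  move=> i hi; exact: hB2.
rewrite /step; change (dim d0 dL L d n.+1.-1) with (dim d0 dL L d n).
apply: Rle_trans (_ : \big[Rplus/0]_(j < dm d n.+1) (b2 n.+1 (X * BL + 1) *
    Rabs (\big[Rplus/0]_(i < dm d n) ((a' i - a i) * W n.+1 i j))) <= _); last first.
  rewrite sumZ; apply: Rmult_le_compat_l; first by apply: Hb2nn; nra.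
  rewrite Rmult_comm; exact: hsum.
apply: sum_le => j _.
have hzj : Rabs (\big[Rplus/0]_(i < dm d n) (a i * W n.+1 i j)) <= X * BL.
  apply: Rle_trans (@sum_prod_bound (dm d n) a (fun i => W n.+1 i j) BL _) _.
    move=> i hi; exact: hB1.
  apply: Rmult_le_compat_r => //.
have hdj : Rabs (\big[Rplus/0]_(i < dm d n) ((a' i - a i) * W n.+1 i j)) <= 1.
  apply: Rle_trans _ (_ : s * BL <= 1); last lra.
  apply: Rle_trans hsum.
  exact: (@sum_ord_term _ (fun j => Rabs (\big[Rplus/0]_(i < dm d n) ((a' i - a i) * W n.+1 i j))) j (ltn_ord j) (fun _ _ => Rabs_pos _)).
rewrite -hdz; apply: sig_lip => //; first nra.
- have := Rabs_triang_inv (\big[Rplus/0]_(i < dm d n) (a' i * W n.+1 i j)) (\big[Rplus/0]_(i < dm d n) (a i * W n.+1 i j)).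
  rewrite hdz. lra.
- lra.
Qed.

Lemma DA k : forall n, (n <= L)%N -> (L - n)%N = k -> exists K, 0 <= K /\
  forall d W, Bud d W -> LB d W -> forall xy, List.In xy D -> exists rho, 0 < rho /\
  forall a' : nat -> R, \big[Rplus/0]_(i < dm d n) Rabs (a' i - act d W xy.1 n i) < rho ->
  Rabs (e (fun o : 'I_dL => fw (dm d) W (L - n) n a' o) xy.2 - e (@fnet sigma d0 dL L d W xy.1) xy.2)
   <= K * \big[Rplus/0]_(i < dm d n) Rabs (a' i - act d W xy.1 n i).
Proof.
elim: k => [|k IH] n hn hk.
- have hnL : n = L by apply/eqP; rewrite eqn_leq hn /= -subn_eq0 hk.
  subst n; rewrite subnn.
  exists (b3 Sb + 1); split; first by have := Hb3nn _ Sb_ge0; lra.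
  move=> d W hb hlb xy hxy.
  set v := @fnet sigma d0 dL L d W xy.1.
  have [del [hdel H]] := @frechet_lip dL (fun u => e u xy.2) v (grad_e v xy.2) (b3 Sb)
     (Hgrad v xy.2) (Hb3 v xy.2 _ Sb_ge0 (hlb xy hxy)).
  exists del; split => // a' ha'.
  have hs : \big[Rplus/0]_(i < dm d L) Rabs (a' i - act d W xy.1 L i) =
            \big[Rplus/0]_(i < dL) Rabs (a' i - v i).
    by rewrite /v /fnet; move: (dmL d) => ->.
  rewrite hs in ha' *.
  exact: (H (fun o : 'I_dL => a' o) ha').
- have hlt : (n < L)%N by rewrite -subn_gt0 hk.
  have [K1 [hK1 H1]] := IH n.+1 hlt (ltac:(by rewrite subnS hk)).
  have [X [hX HX]] := fwd n hn.
  have hBL := BL_ge0.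
  have hnL : (1 <= n.+1 <= L)%N by rewrite hlt.
  set G := b2 n.+1 (X * BL + 1).
  have hG : 0 <= G by apply: Hb2nn; nra.
  exists (K1 * (G * BL)); split; first by apply: Rmult_le_pos => //; apply: Rmult_le_pos.
  move=> d W hb hlb xy hxy.
  have [rho1 [hrho1 Hr]] := H1 d W hb hlb xy hxy.
  have hGB : 0 <= G * BL by apply: Rmult_le_pos.
  exists (Rmin (/ (BL + 1)) (rho1 / (G * BL + 1))); split.
    apply: Rmin_glb_lt; [apply: Rinv_0_lt_compat; lra | apply: Rdiv_lt_0_compat; lra].
  move=> a' ha'.
  set s := \big[Rplus/0]_(i < dm d n) Rabs (a' i - act d W xy.1 n i) in ha' *.
  have hs0 : 0 <= s by apply: sum_ge0 => *; exact: Rabs_pos.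
  have hs1 : s < / (BL + 1) by apply: Rlt_le_trans ha' (Rmin_l _ _).
  have hs2 : s < rho1 / (G * BL + 1) by apply: Rlt_le_trans ha' (Rmin_r _ _).
  have hBs : BL * s <= 1.
    have : (BL + 1) * s < 1.
      have := Rmult_lt_compat_l (BL + 1) _ _ (ltac:(lra)) hs1. rewrite Rinv_r; lra.
    nra.
  have hsd := @step_diff d W n (act d W xy.1 n) a' X hnL hb (HX d W hb xy hxy) hBs.
  rewrite -/G -/s in hsd.
  have hGs : G * (BL * s) < rho1.
    have : (G * BL + 1) * s < rho1.
      have := Rmult_lt_compat_l (G * BL + 1) _ _ (ltac:(lra)) hs2.
      replace ((G * BL + 1) * (rho1 / (G * BL + 1))) with rho1 by (field; lra). done.
    nra.
  have := Hr (step (dm d) W n.+1 a') (Rle_lt_trans _ _ _ hsd hGs).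
  rewrite hk /= => h.
  rewrite subnS hk /= in h. apply: Rle_trans h _.
  rewrite Rmult_assoc; apply: Rmult_le_compat_l => //.
  apply: Rle_trans hsd _; lra.
Qed.

Lemma sum_nat_single m n (F : nat -> R) j : (m <= j < n)%N ->
  (forall i, (m <= i < n)%N -> i <> j -> F i = 0) -> \big[Rplus/0]_(m <= i < n) F i = F j.
Proof.
move=> hj H; rewrite (bigD1_seq j) ?mem_index_iota /index_iota ?iota_uniq //=.
rewrite big1_seq ?Rplus_0_r // => i /andP [/eqP hij]; rewrite -/(index_iota m n) mem_index_iota => hi.
exact: H.
Qed.

Lemma fanin_eq d W W' l j : (forall i, (i < dm d l.-1)%N -> W' l i j = W l i j) ->
  fanin_pnorm p (dm d) W' l j = fanin_pnorm p (dm d) W l j.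
Proof. move=> H; rewrite /fanin_pnorm; congr rpow; apply: eq_bigr => i _; by rewrite H. Qed.

Lemma Omega_change d W W' l0 j0 : (1 <= l0 <= L)%N -> (j0 < dm d l0)%N ->
  (forall l j, (1 <= l <= L)%N -> (j < dm d l)%N -> (l, j) <> (l0, j0) ->
     forall i, (i < dm d l.-1)%N -> W' l i j = W l i j) ->
  Omega_in lambda p L (dm d) W' - Omega_in lambda p L (dm d) W =
  lambda * (fanin_pnorm p (dm d) W' l0 j0 - fanin_pnorm p (dm d) W l0 j0).
Proof.
move=> hl hj H; rewrite /Omega_in -Rmult_minus_distr_l; congr (lambda * _).
rewrite -sumB (@sum_nat_single _ _ _ l0) //.
- rewrite -sumB (@sum_ord_single _ (fun j => fanin_pnorm p (dm d) W' l0 j - fanin_pnorm p (dm d) W l0 j) j0) //.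
  move=> j hj' hne; rewrite (@fanin_eq d W); first ring.
  apply: H => //; move=> [e']; exact: hne e'.
- move=> l hl' hne; rewrite -sumB big1 // => j _.
  rewrite (@fanin_eq d W); first ring.
  apply: H => //.
  move=> [e' _]; exact: hne e'.
Qed.

Lemma lm_ineq d W W' Q :
  @Eobj Y sigma d0 dL L e D lambda p d W <= @Eobj Y sigma d0 dL L e D lambda p d W' -> 0 <= Q ->
  (forall xy, List.In xy D -> Rabs (e (@fnet sigma d0 dL L d W' xy.1) xy.2 - e (@fnet sigma d0 dL L d W xy.1) xy.2) <= Q) ->
  Omega_in lambda p L (dm d) W - Omega_in lambda p L (dm d) W' <= Q.
Proof.
rewrite /Eobj => hE hQ H.
have hs := @sum_bound_list _ D (fun xy => e (@fnet sigma d0 dL L d W' xy.1) xy.2)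
   (fun xy => e (@fnet sigma d0 dL L d W xy.1) xy.2) Q H.
set S1 := \big[Rplus/0]_(xy <- D) e (@fnet sigma d0 dL L d W xy.1) xy.2 in hE hs *.
set S2 := \big[Rplus/0]_(xy <- D) e (@fnet sigma d0 dL L d W' xy.1) xy.2 in hE hs *.
case hD : (size D) => [|n].
- have hD0 : D = [::] by apply/size0nil.
  have h1 : S1 = 0 by rewrite /S1 hD0 big_nil.
  have h2 : S2 = 0 by rewrite /S2 hD0 big_nil.
  rewrite h1 h2 !Rmult_0_r in hE. lra.
- rewrite hD in hE hs.
  have hn : 0 < INR n.+1 by apply: lt_0_INR; lia.
  have : / INR n.+1 * (S2 - S1) <= / INR n.+1 * (INR n.+1 * Q).
    apply: Rmult_le_compat_l => //; apply: Rlt_le; exact: Rinv_0_lt_compat.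
  rewrite -Rmult_assoc Rinv_l; lra.
Qed.

Lemma act_agree d W W' (x : 'I_d0 -> R) m : (forall n i j, (1 <= n <= m)%N -> W' n i j = W n i j) ->
  forall j, act d W' x m j = act d W x m j.
Proof.
elim: m => [|m IH] H j //=.
congr (sigma m.+1 _); apply: eq_bigr => i _.
rewrite IH; last by move=> n i' j' /andP [h1 h2]; apply: H; rewrite h1 /=; exact: leqW.
by rewrite H ?leqnn.
Qed.

Lemma fw_agree d W W' k m a : (forall n i j, (m < n)%N -> W' n i j = W n i j) ->
  fw (dm d) W' k m a = fw (dm d) W k m a.
Proof.
elim: k m a => [|k IH] m a H //=.
have -> : step (dm d) W' m.+1 a = step (dm d) W m.+1 a.
  apply: functional_extensionality => j; rewrite /step; congr (sigma m.+1 _).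
  apply: eq_bigr => i _; rewrite H //.
apply: IH => n i j hn; apply: H; exact: ltnW.
Qed.

Lemma act_fw d W (x : 'I_d0 -> R) k : forall m j, act d W x (m + k) j = fw (dm d) W k m (act d W x m) j.
Proof.
elim: k => [|k IH] m j; first by rewrite addn0.
rewrite addnS -addSn IH //.
Qed.

Lemma fnet_fw d W W' (x : 'I_d0 -> R) m : (m <= L)%N ->
  (forall n i j, (m < n)%N -> W' n i j = W n i j) ->
  @fnet sigma d0 dL L d W' x = (fun o : 'I_dL => fw (dm d) W (L - m) m (act d W' x m) o).
Proof.
move=> hm H; apply: functional_extensionality => o; rewrite /fnet.
have -> : act d W' x L o = act d W' x (m + (L - m)) o by rewrite subnKC.
by rewrite act_fw (@fw_agree d W W').
Qed.

Lemma step_diff_single d W n (a a' : nat -> R) (X : R) j :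
  (1 <= n.+1 <= L)%N -> Bud d W ->
  \big[Rplus/0]_(i < dm d n) Rabs (a i) <= X -> (j < dm d n)%N ->
  (forall i, (i < dm d n)%N -> i <> j -> a' i = a i) ->
  BL * Rabs (a' j - a j) <= 1 ->
  \big[Rplus/0]_(k < dm d n.+1) Rabs (step (dm d) W n.+1 a' k - step (dm d) W n.+1 a k)
   <= b2 n.+1 (X * BL + 1) * (Rabs (a' j - a j) * \big[Rplus/0]_(k < dm d n.+1) Rabs (W n.+1 j k)).
Proof.
move=> hn [hB1 hB2] hX hj ha hs.
have hBL := BL_ge0.
have hX0 : 0 <= X by apply: Rle_trans hX; apply: sum_ge0 => *; exact: Rabs_pos.
have hdz : forall k, \big[Rplus/0]_(i < dm d n) (a' i * W n.+1 i k) -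
       \big[Rplus/0]_(i < dm d n) (a i * W n.+1 i k) = (a' j - a j) * W n.+1 j k.
  move=> k; rewrite -sumB.
  rewrite (@sum_ord_single _ (fun i => a' i * W n.+1 i k - a i * W n.+1 i k) j) //; first ring.
  move=> i hi hij; rewrite ha //; ring.
rewrite /step; change (dim d0 dL L d n.+1.-1) with (dim d0 dL L d n).
rewrite -Rmult_assoc -sumZ.
apply: sum_le => k _.
have hjk : Rabs (W n.+1 j k) <= BL by apply: hB1 => //; exact: ltn_ord.
have hzk : Rabs (\big[Rplus/0]_(i < dm d n) (a i * W n.+1 i k)) <= X * BL.
  apply: Rle_trans (@sum_prod_bound (dm d n) a (fun i => W n.+1 i k) BL _) _.
    move=> i hi; apply: hB1 => //; exact: ltn_ord.
  apply: Rmult_le_compat_r => //.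
have hd1 : Rabs ((a' j - a j) * W n.+1 j k) <= 1.
  rewrite Rabs_mult; have := Rabs_pos (a' j - a j); nra.
rewrite Rmult_assoc -Rabs_mult -hdz; apply: sig_lip => //; first nra.
- have := Rabs_triang_inv (\big[Rplus/0]_(i < dm d n) (a' i * W n.+1 i k)) (\big[Rplus/0]_(i < dm d n) (a i * W n.+1 i k)).
  rewrite hdz. lra.
- lra.
Qed.

Lemma step_wdiff d W W' n (a : nat -> R) (X : R) j k0 :
  (1 <= n.+1 <= L)%N -> Bud d W ->
  \big[Rplus/0]_(i < dm d n) Rabs (a i) <= X -> (j < dm d n)%N -> (k0 < dm d n.+1)%N ->
  (forall i k, (i < dm d n)%N -> (k < dm d n.+1)%N -> (i, k) <> (j, k0) -> W' n.+1 i k = W n.+1 i k) ->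
  Rabs (a j) * Rabs (W' n.+1 j k0 - W n.+1 j k0) <= 1 ->
  \big[Rplus/0]_(k < dm d n.+1) Rabs (step (dm d) W' n.+1 a k - step (dm d) W n.+1 a k)
   <= b2 n.+1 (X * BL + 1) * (Rabs (a j) * Rabs (W' n.+1 j k0 - W n.+1 j k0)).
Proof.
move=> hn [hB1 hB2] hX hj hk0 hW hs.
have hBL := BL_ge0.
have hX0 : 0 <= X by apply: Rle_trans hX; apply: sum_ge0 => *; exact: Rabs_pos.
rewrite /step; change (dim d0 dL L d n.+1.-1) with (dim d0 dL L d n).
rewrite (@sum_ord_single _ (fun k => Rabs (sigma n.+1 (\big[Rplus/0]_(i < dm d n) (a i * W' n.+1 i k)) -
     sigma n.+1 (\big[Rplus/0]_(i < dm d n) (a i * W n.+1 i k)))) k0) //; last first.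
  move=> k hk hne; have -> : \big[Rplus/0]_(i < dm d n) (a i * W' n.+1 i k) = \big[Rplus/0]_(i < dm d n) (a i * W n.+1 i k).
    apply: eq_bigr => i _; rewrite hW //; move=> [_ e']; exact: hne e'.
  rewrite Rminus_eq_0 Rabs_R0 //.
have hdz : \big[Rplus/0]_(i < dm d n) (a i * W' n.+1 i k0) -
       \big[Rplus/0]_(i < dm d n) (a i * W n.+1 i k0) = a j * (W' n.+1 j k0 - W n.+1 j k0).
  rewrite -sumB.
  rewrite (@sum_ord_single _ (fun i => a i * W' n.+1 i k0 - a i * W n.+1 i k0) j) //; first ring.
  move=> i hi hij; rewrite hW //; first ring.
  by case.
have hzk : Rabs (\big[Rplus/0]_(i < dm d n) (a i * W n.+1 i k0)) <= X * BL.
  apply: Rle_trans (@sum_prod_bound (dm d n) a (fun i => W n.+1 i k0) BL _) _.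
    move=> i hi; apply: hB1 => //.
  apply: Rmult_le_compat_r => //.
rewrite -Rabs_mult -hdz; apply: sig_lip => //; first nra.
- have := Rabs_triang_inv (\big[Rplus/0]_(i < dm d n) (a i * W' n.+1 i k0)) (\big[Rplus/0]_(i < dm d n) (a i * W n.+1 i k0)).
  rewrite hdz Rabs_mult. lra.
- lra.
Qed.

Lemma Rinv_INR_ge0 n : 0 <= / INR n.
Proof.
case: n => [|n]; first by rewrite Rinv_0; lra.
apply: Rlt_le; apply: Rinv_0_lt_compat; apply: lt_0_INR; lia.
Qed.

Lemma good_facts d W : @Eobj Y sigma d0 dL L e D lambda p d W <= B ->
  [/\ Bud d W, LB d W,
   (forall l, (1 <= l <= L)%N -> \big[Rplus/0]_(j < dm d l) fanin_pnorm p (dm d) W l j <= BL) &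
   (forall l i j, (i < dm d l.-1)%N -> Rabs (W l i j) <= fanin_pnorm p (dm d) W l j)].
Proof.
rewrite /Eobj => hE.
have hS0 : 0 <= \big[Rplus/0]_(xy <- D) e (@fnet sigma d0 dL L d W xy.1) xy.2.
  apply: sum_ge0 => *; exact: Hpos.
have hNn : forall l j, 0 <= fanin_pnorm p (dm d) W l j by move=> *; exact: rpow_ge0.
have hent : forall l i j, (i < dm d l.-1)%N -> Rabs (W l i j) <= fanin_pnorm p (dm d) W l j.
  move=> l i j hi; exact: (@entry_le_normc p (dm d l.-1) (fun i => W l i j) i Hp hi).
have hI := Rinv_INR_ge0 (size D).
have hOm : Omega_in lambda p L (dm d) W <= B.
  have := Rmult_le_pos _ _ hI hS0; lra.
have hsum : forall l, (1 <= l <= L)%N -> \big[Rplus/0]_(j < dm d l) fanin_pnorm p (dm d) W l j <= BL.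
  move=> l hl.
  have h1 : \big[Rplus/0]_(j < dm d l) fanin_pnorm p (dm d) W l j <=
     \big[Rplus/0]_(1 <= l' < L.+1) \big[Rplus/0]_(j < dm d l') fanin_pnorm p (dm d) W l' j.
    apply: (@sum_nat_In _ (fun l' => \big[Rplus/0]_(j < dm d l') fanin_pnorm p (dm d) W l' j)).
    - move=> l'; apply: sum_ge0 => *; exact: hNn.
    - by rewrite mem_index_iota ltnS.
  move: hOm; rewrite /Omega_in => hOm.
  have h2 : \big[Rplus/0]_(1 <= l' < L.+1) \big[Rplus/0]_(j < dm d l') fanin_pnorm p (dm d) W l' j <= B / lambda.
    apply: (Rmult_le_reg_l lambda) => //.
    replace (lambda * (B / lambda)) with B by (field; lra). exact: hOm.
  have : B / lambda <= BL.
    rewrite /BL /Rdiv; apply: Rmult_le_compat_r; last exact: Rle_abs.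
    apply: Rlt_le; exact: Rinv_0_lt_compat.
  lra.
split => //.
- split.
  + move=> l hl i j hi hj; apply: Rle_trans (hent l i j hi) _.
    apply: Rle_trans (hsum l hl).
    exact: (@sum_ord_term _ (fun j => fanin_pnorm p (dm d) W l j) j hj (fun _ _ => hNn _ _)).
  + move=> l hl i hi; apply: Rle_trans (hsum l hl).
    apply: sum_le => j _; exact: hent.
- move=> xy hxy.
  have h1 : e (@fnet sigma d0 dL L d W xy.1) xy.2 <= \big[Rplus/0]_(xy <- D) e (@fnet sigma d0 dL L d W xy.1) xy.2.
    exact: (@sum_In _ D (fun xy => e (@fnet sigma d0 dL L d W xy.1) xy.2) xy (fun _ => Hpos _ _) hxy).
  have hn : (0 < size D)%N by move: hxy; case: (D).
  have hn' : 0 < INR (size D) by apply: lt_0_INR; apply/ltP.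
  have hOm0 : 0 <= Omega_in lambda p L (dm d) W.
    rewrite /Omega_in; apply: Rmult_le_pos; first lra.
    apply: sum_ge0 => l _; apply: sum_ge0 => *; exact: hNn.
  have h2 : / INR (size D) * \big[Rplus/0]_(xy <- D) e (@fnet sigma d0 dL L d W xy.1) xy.2 <= Rabs B.
    have := Rle_abs B; lra.
  have h3 : \big[Rplus/0]_(xy <- D) e (@fnet sigma d0 dL L d W xy.1) xy.2 <= INR (size D) * Rabs B.
    apply: (Rmult_le_reg_l (/ INR (size D))); first exact: Rinv_0_lt_compat.
    rewrite -Rmult_assoc Rinv_l; lra.
  rewrite /Sb; lra.
Qed.

Lemma perturb_conclude d W (W' : R -> nat -> nat -> nat -> R) (Q : R) :
  @local_min Y sigma d0 dL L e D lambda p d W -> 0 <= Q ->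
  (forall t, 0 < t < 1 -> forall n i k, (1 <= n <= L)%N -> (i < dm d n.-1)%N -> (k < dm d n)%N ->
     Rabs (W' t n i k - W n i k) <= t * BL) ->
  (forall xy, List.In xy D -> exists tau, 0 < tau /\ forall t, 0 < t < tau ->
     Rabs (e (@fnet sigma d0 dL L d (W' t) xy.1) xy.2 - e (@fnet sigma d0 dL L d W xy.1) xy.2) <= Q * t) ->
  exists t, 0 < t < 1 /\
    Omega_in lambda p L (dm d) W - Omega_in lambda p L (dm d) (W' t) <= Q * t.
Proof.
move=> [eps [heps hlm]] hQ hclose hdat.
have [tau [htau Ht]] := @list_min _ D (fun xy t => Rabs (e (@fnet sigma d0 dL L d (W' t) xy.1) xy.2 - e (@fnet sigma d0 dL L d W xy.1) xy.2) <= Q * t) hdat.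
have hBL := BL_ge0.
set t := Rmin (Rmin tau 1) (eps / (BL + 1)) / 2.
have he1 : 0 < eps / (BL + 1) by apply: Rdiv_lt_0_compat; lra.
have hm1 := Rmin_l (Rmin tau 1) (eps / (BL + 1)).
have hm2 := Rmin_r (Rmin tau 1) (eps / (BL + 1)).
have hm3 := Rmin_l tau 1. have hm4 := Rmin_r tau 1.
have hmp : 0 < Rmin (Rmin tau 1) (eps / (BL + 1)).
  apply: Rmin_glb_lt => //; apply: Rmin_glb_lt => //; lra.
have ht : 0 < t < 1 by rewrite /t; lra.
exists t; split => //.
apply: lm_ineq; last first.
- move=> xy hxy; apply: Ht => //; rewrite /t; lra.
- apply: Rmult_le_pos; lra.
- apply: hlm => l i k hl hi hk.
  apply: Rle_lt_trans (hclose t ht l i k hl hi hk) _.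
  have : t * (BL + 1) < eps.
    have : t < eps / (BL + 1) by rewrite /t; lra.
    move=> h; have := Rmult_lt_compat_r (BL + 1) _ _ (ltac:(lra)) h.
    replace (eps / (BL + 1) * (BL + 1)) with eps by (field; lra). done.
  nra.
Qed.

Definition scol (W : nat -> nat -> nat -> R) l j t : nat -> nat -> nat -> R :=
  fun m i k => if (m == l) && (k == j) then (1 - t) * W m i k else W m i k.

Lemma part_a n : (n.+2 <= L)%N -> exists Ca, 0 <= Ca /\ forall d W,
  @proper_B_local_min Y sigma d0 dL L e D lambda p B d W ->
  forall j, (j < dm d n.+1)%N -> 0 < fanin_pnorm p (dm d) W n.+1 j ->
  lambda <= Ca * \big[Rplus/0]_(k < dm d n.+2) Rabs (W n.+2 j k).
Proof.
move=> hn.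
have hnL : (n <= L)%N by lia.
have hn1L : (n.+1 <= L)%N by lia.
have [Xp [hXp HXp]] := fwd n hnL.
have [X1 [hX1 HX1]] := fwd n.+1 hn1L.
have [K [hK HK]] := @DA (L - n.+2) n.+2 hn erefl.
have hBL := BL_ge0.
set Gl := b2 n.+1 (Xp * BL + 1).
set Gl1 := b2 n.+2 (X1 * BL + 1).
have hGl : 0 <= Gl by apply: Hb2nn; nra.
have hGl1 : 0 <= Gl1 by apply: Hb2nn; nra.
exists (K * Gl1 * Gl * Xp); split.
  repeat apply: Rmult_le_pos => //.
move=> d W [hlm [hEB hprop]] j hj hN.
have [hbud hlb hsumN hent] := good_facts d W hEB.
set N := fanin_pnorm p (dm d) W n.+1 j in hN *.
set R := \big[Rplus/0]_(k < dm d n.+2) Rabs (W n.+2 j k).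
have hR : 0 <= R by apply: sum_ge0 => *; exact: Rabs_pos.
have hQ : 0 <= K * Gl1 * Gl * Xp * N * R by repeat apply: Rmult_le_pos => //; lra.
have [t [ht hOm]] : exists t, 0 < t < 1 /\ Omega_in lambda p L (dm d) W - Omega_in lambda p L (dm d) (scol W n.+1 j t) <= K * Gl1 * Gl * Xp * N * R * t.
  apply: (@perturb_conclude d W (scol W n.+1 j) _ hlm hQ).
-
  move=> t ht m i k hm hi hk; rewrite /scol.
  case: ifP => _.
  + replace ((1 - t) * W m i k - W m i k) with (- (t * W m i k)) by ring.
    rewrite Rabs_Ropp Rabs_mult Rabs_pos_eq; last lra.
    apply: Rmult_le_compat_l; first lra.
    by case: hbud => h1 _; apply: h1.
  + rewrite Rminus_diag Rabs_R0; nra.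
-
  move=> xy hxy.
  have [rho [hrho Hr]] := HK d W hbud hlb xy hxy.
  set al := Gl * Xp * N.
  have hal : 0 <= al by rewrite /al; repeat apply: Rmult_le_pos => //; lra.
  exists (Rmin 1 (Rmin (/ (al * BL + 1)) (rho / (Gl1 * al * R + 1)))); split.
    apply: Rmin_glb_lt; first lra.
    have : 0 <= Gl1 * al * R by apply: Rmult_le_pos => //; apply: Rmult_le_pos.
    move=> h; apply: Rmin_glb_lt; [apply: Rinv_0_lt_compat; nra | apply: Rdiv_lt_0_compat; lra].
  move=> t ht.
  have ht1 : t < 1 by have := Rmin_l 1 (Rmin (/ (al * BL + 1)) (rho / (Gl1 * al * R + 1))); lra.
  have hmr := Rmin_r 1 (Rmin (/ (al * BL + 1)) (rho / (Gl1 * al * R + 1))).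
  have ht2 : t < / (al * BL + 1) by have := Rmin_l (/ (al * BL + 1)) (rho / (Gl1 * al * R + 1)); lra.
  have ht3 : t < rho / (Gl1 * al * R + 1) by have := Rmin_r (/ (al * BL + 1)) (rho / (Gl1 * al * R + 1)); lra.
  rewrite (@fnet_fw d W (scol W n.+1 j t) xy.1 n.+1 hn1L); last first.
    move=> m i k hm; rewrite /scol; case: eqP => // hm'; lia.
  have hLk : (L - n.+1 = (L - n.+2).+1)%N by lia.
  rewrite hLk /=.
  set a := act d W xy.1 n.+1.
  set a' := act d (scol W n.+1 j t) xy.1 n.+1.
  have hlow : forall i, act d (scol W n.+1 j t) xy.1 n i = act d W xy.1 n i.
    apply: act_agree => m i k /andP [_ hm]; rewrite /scol; case: eqP => // hm'; lia.
  have hz : Rabs (\big[Rplus/0]_(i < dm d n) (act d W xy.1 n i * W n.+1 i j)) <= Xp * N.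
    apply: Rle_trans (@sum_prod_bound (dm d n) (act d W xy.1 n) (fun i => W n.+1 i j) N _) _.
      move=> i hi; exact: hent.
    apply: Rmult_le_compat_r; [lra | exact: HXp].
  have hzB : Rabs (\big[Rplus/0]_(i < dm d n) (act d W xy.1 n i * W n.+1 i j)) <= Xp * BL.
    have [hB1 _] := hbud.
    apply: Rle_trans (@sum_prod_bound (dm d n) (act d W xy.1 n) (fun i => W n.+1 i j) BL _) _.
      move=> i hi; apply: hB1 => //.
    apply: Rmult_le_compat_r; [lra | exact: HXp].
  have haj : a' j = sigma n.+1 ((1 - t) * \big[Rplus/0]_(i < dm d n) (act d W xy.1 n i * W n.+1 i j)).
    rewrite /a' /= -sumZ; congr (sigma n.+1 _); apply: eq_bigr => i _.
    rewrite hlow /scol !eqxx /=; ring.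
  have hai : forall i, (i < dm d n.+1)%N -> i <> j -> a' i = a i.
    move=> i hi hij; rewrite /a' /a /=; congr (sigma n.+1 _); apply: eq_bigr => i' _.
    rewrite hlow /scol eqxx /=; case: eqP => // //.
  set z := \big[Rplus/0]_(i < dm d n) (act d W xy.1 n i * W n.+1 i j) in hz hzB haj.
  have hda : Rabs (a' j - a j) <= al * t.
    rewrite haj /a /=.
    change (\big[Rplus/0]_(i < dim d0 dL L d n) (act d W xy.1 n i * W n.+1 i j)) with z.
    apply: Rle_trans (_ : Gl * Rabs ((1 - t) * z - z) <= _).
      apply: sig_lip; [lia | nra | | lra].
      rewrite Rabs_mult Rabs_pos_eq; [have := Rabs_pos z; nra | lra].
    replace ((1 - t) * z - z) with (- (t * z)) by ring.
    rewrite Rabs_Ropp Rabs_mult Rabs_pos_eq; last lra.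
    have h1 : t * Rabs z <= t * (Xp * N) by apply: Rmult_le_compat_l; lra.
    have := Rmult_le_compat_l Gl _ _ hGl h1. rewrite /al; lra.
  have hsmall : BL * Rabs (a' j - a j) <= 1.
    have h1 : (al * BL + 1) * t < 1.
      have hp1 : 0 < al * BL + 1 by have := Rmult_le_pos _ _ hal hBL; lra.
      have := Rmult_lt_compat_l (al * BL + 1) _ _ hp1 ht2. rewrite Rinv_r; lra.
    have := Rmult_le_compat_l BL _ _ hBL hda. have := Rmult_le_pos _ _ hal hBL. nra.
  have hsd := @step_diff_single d W n.+1 a a' X1 j (ltac:(lia)) hbud (HX1 d W hbud xy hxy) hj hai hsmall.
  rewrite -/Gl1 -/R in hsd.
  have hsd2 : \big[Rplus/0]_(k < dm d n.+2) Rabs (step (dm d) W n.+2 a' k - step (dm d) W n.+2 a k)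
     <= Gl1 * al * R * t.
    apply: Rle_trans hsd _.
    have := Rabs_pos (a' j - a j).
    have : Rabs (a' j - a j) * R <= al * t * R by apply: Rmult_le_compat_r.
    move=> h1 h2. have := Rmult_le_compat_l Gl1 _ _ hGl1 h1. lra.
  have hGAR : 0 <= Gl1 * al * R by apply: Rmult_le_pos => //; apply: Rmult_le_pos.
  have hlt : Gl1 * al * R * t < rho.
    have := Rmult_lt_compat_l (Gl1 * al * R + 1) _ _ (ltac:(lra)) ht3.
    replace ((Gl1 * al * R + 1) * (rho / (Gl1 * al * R + 1))) with rho by (field; lra).
    nra.
  have := Hr (step (dm d) W n.+2 a') (Rle_lt_trans _ _ _ hsd2 hlt).
  move=> h; apply: Rle_trans h _.
  apply: Rle_trans (_ : K * (Gl1 * al * R * t) <= _).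
    apply: Rmult_le_compat_l => //; exact: hsd2.
  rewrite /al; lra.
-
  have hOc := @Omega_change d W (scol W n.+1 j t) n.+1 j (ltac:(lia)) hj.
  have hOc2 := hOc (ltac:(move=> l k hl hk hne i hi; rewrite /scol; case: ifP => // /andP [/eqP e1 /eqP e2]; by exfalso; apply: hne; rewrite e1 e2)).
  have hN' : fanin_pnorm p (dm d) (scol W n.+1 j t) n.+1 j = (1 - t) * N.
    rewrite /N -(@normc_scale p (dm d n) (fun i => W n.+1 i j) (1 - t) Hp); last lra.
    rewrite /fanin_pnorm /normc; congr rpow; apply: eq_bigr => i _; by rewrite /scol !eqxx.
  rewrite hN' in hOc2.
  have hOm2 : (lambda * N) * t <= (K * Gl1 * Gl * Xp * R * N) * t by rewrite -/N in hOc2; lra.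
  have hOm3 := Rmult_le_reg_r t _ _ (proj1 ht) hOm2.
  apply: (Rmult_le_reg_r N) => //; lra.
Qed.

Definition sent (W : nat -> nat -> nat -> R) l j k0 t : nat -> nat -> nat -> R :=
  fun m i k => if (m == l) && (i == j) && (k == k0) then (1 - t) * W m i k else W m i k.

Lemma part_b n : (n.+2 <= L)%N -> exists Cb, 0 <= Cb /\ forall d W,
  @proper_B_local_min Y sigma d0 dL L e D lambda p B d W ->
  forall j k0, (j < dm d n.+1)%N -> (k0 < dm d n.+2)%N -> W n.+2 j k0 <> 0 ->
  lambda * Rpower (Rabs (W n.+2 j k0)) (p - 1) <=
    p * Cb * fanin_pnorm p (dm d) W n.+1 j * Rpower (fanin_pnorm p (dm d) W n.+2 k0) (p - 1).
Proof.
move=> hn.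
have hnL : (n <= L)%N by lia.
have hn1L : (n.+1 <= L)%N by lia.
have [Xp [hXp HXp]] := fwd n hnL.
have [X1 [hX1 HX1]] := fwd n.+1 hn1L.
have [K [hK HK]] := @DA (L - n.+2) n.+2 hn erefl.
have hBL := BL_ge0.
set Gl1 := b2 n.+2 (X1 * BL + 1).
set b1l := b1 n.+1 (Xp * BL).
have hGl1 : 0 <= Gl1 by apply: Hb2nn; nra.
have hb1l : 0 <= b1l by apply: Hb1nn; nra.
have hCb : 0 <= K * Gl1 * b1l * Xp by apply: Rmult_le_pos => //; apply: Rmult_le_pos => //; apply: Rmult_le_pos.
exists (K * Gl1 * b1l * Xp); split => //.
move=> d W [hlm [hEB hprop]] j k0 hj hk0 hw.
have [hbud hlb hsumN hent] := good_facts d W hEB.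
set N := fanin_pnorm p (dm d) W n.+1 j.
set w := W n.+2 j k0 in hw *.
have hN0 : 0 <= N := rpow_ge0 _ _.
have hu : 0 < Rabs w by apply: Rabs_pos_lt.
have hwB : Rabs w <= BL by have [hB1 _] := hbud; apply: hB1 => //; lia.
have hQ : 0 <= K * Gl1 * b1l * Xp * N * Rabs w.
  apply: Rmult_le_pos; [apply: Rmult_le_pos => // | lra].
have [t [ht hOm]] : exists t, 0 < t < 1 /\ Omega_in lambda p L (dm d) W - Omega_in lambda p L (dm d) (sent W n.+2 j k0 t) <= K * Gl1 * b1l * Xp * N * Rabs w * t.
  apply: (@perturb_conclude d W (sent W n.+2 j k0) _ hlm hQ).
-
  move=> t ht m i k hm hi hk; rewrite /sent.
  case: ifP => _.
  + replace ((1 - t) * W m i k - W m i k) with (- (t * W m i k)) by ring.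
    rewrite Rabs_Ropp Rabs_mult Rabs_pos_eq; last lra.
    apply: Rmult_le_compat_l; first lra.
    by have [h1 _] := hbud; apply: h1.
  + rewrite Rminus_diag Rabs_R0; nra.
-
  move=> xy hxy.
  have [rho [hrho Hr]] := HK d W hbud hlb xy hxy.
  set a := act d W xy.1 n.+1.
  have hz : Rabs (\big[Rplus/0]_(i < dm d n) (act d W xy.1 n i * W n.+1 i j)) <= Xp * N.
    apply: Rle_trans (@sum_prod_bound (dm d n) (act d W xy.1 n) (fun i => W n.+1 i j) N _) _.
      move=> i hi; exact: hent.
    apply: Rmult_le_compat_r; [lra | exact: HXp].
  have hzB : Rabs (\big[Rplus/0]_(i < dm d n) (act d W xy.1 n i * W n.+1 i j)) <= Xp * BL.
    have [hB1 _] := hbud.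
    apply: Rle_trans (@sum_prod_bound (dm d n) (act d W xy.1 n) (fun i => W n.+1 i j) BL _) _.
      move=> i hi; apply: hB1 => //.
    apply: Rmult_le_compat_r; [lra | exact: HXp].
  have haj : Rabs (a j) <= b1l * (Xp * N).
    rewrite /a /=.
    apply: Rle_trans (Hb1 _ _ _ _ _ hzB) _; [lia | nra |].
    apply: Rmult_le_compat_l => //.
  have haj1 : Rabs (a j) <= X1.
    apply: Rle_trans (HX1 d W hbud xy hxy).
    exact: (@sum_ord_term _ (fun i => Rabs (a i)) j hj (fun _ _ => Rabs_pos _)).
  set be := Gl1 * b1l * Xp * N * Rabs w.
  have hbe : 0 <= be by rewrite /be; apply: Rmult_le_pos; [apply: Rmult_le_pos => //; apply: Rmult_le_pos => //; apply: Rmult_le_pos | lra].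
  have hX1B : 0 <= X1 * BL by nra.
  exists (Rmin 1 (Rmin (/ (X1 * BL + 1)) (rho / (be + 1)))); split.
    apply: Rmin_glb_lt; first lra.
    apply: Rmin_glb_lt; [apply: Rinv_0_lt_compat; lra | apply: Rdiv_lt_0_compat; lra].
  move=> t ht.
  have hmr := Rmin_r 1 (Rmin (/ (X1 * BL + 1)) (rho / (be + 1))).
  have ht1 : t < 1 by have := Rmin_l 1 (Rmin (/ (X1 * BL + 1)) (rho / (be + 1))); lra.
  have ht2 : t < / (X1 * BL + 1) by have := Rmin_l (/ (X1 * BL + 1)) (rho / (be + 1)); lra.
  have ht3 : t < rho / (be + 1) by have := Rmin_r (/ (X1 * BL + 1)) (rho / (be + 1)); lra.
  rewrite (@fnet_fw d W (sent W n.+2 j k0 t) xy.1 n.+2 hn); last first.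
    move=> m i k hm; rewrite /sent; case: eqP => // hm'; lia.
  have hlow : act d (sent W n.+2 j k0 t) xy.1 n.+1 = act d W xy.1 n.+1.
    apply: functional_extensionality; apply: act_agree => m i k /andP [_ hm]; rewrite /sent; case: eqP => // hm'; lia.
  have -> : act d (sent W n.+2 j k0 t) xy.1 n.+2 = step (dm d) (sent W n.+2 j k0 t) n.+2 a.
    by rewrite /a -hlow.
  have hdw : W n.+2 j k0 = w by [].
  have hWd : sent W n.+2 j k0 t n.+2 j k0 - W n.+2 j k0 = - (t * w).
    rewrite /sent !eqxx /=; rewrite hdw; ring.
  have hsmall : Rabs (a j) * Rabs (sent W n.+2 j k0 t n.+2 j k0 - W n.+2 j k0) <= 1.
    rewrite hWd Rabs_Ropp Rabs_mult (Rabs_pos_eq t); last lra.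
    have h1 : (X1 * BL + 1) * t < 1.
      have := Rmult_lt_compat_l (X1 * BL + 1) _ _ (ltac:(lra)) ht2. rewrite Rinv_r; lra.
    have h2 : Rabs (a j) * (t * Rabs w) <= X1 * (t * BL).
      apply: Rmult_le_compat; try (apply: Rmult_le_pos; lra); try exact: Rabs_pos; first done.
      apply: Rmult_le_compat_l; lra.
    nra.
  have hsd := @step_wdiff d W (sent W n.+2 j k0 t) n.+1 a X1 j k0 (ltac:(lia)) hbud (HX1 d W hbud xy hxy) hj hk0
    (ltac:(move=> i k hi hk hne; rewrite /sent eqxx /=; case: ifP => // /andP [/eqP e1 /eqP e2]; by exfalso; apply: hne; rewrite e1 e2)) hsmall.
  rewrite -/Gl1 hWd Rabs_Ropp Rabs_mult (Rabs_pos_eq t) in hsd; last lra.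
  have hsd2 : \big[Rplus/0]_(k < dm d n.+2) Rabs (step (dm d) (sent W n.+2 j k0 t) n.+2 a k - step (dm d) W n.+2 a k)
     <= be * t.
    apply: Rle_trans hsd _.
    have h1 : Rabs (a j) * (t * Rabs w) <= (b1l * (Xp * N)) * (t * Rabs w).
      apply: Rmult_le_compat_r => //; apply: Rmult_le_pos; lra.
    have := Rmult_le_compat_l Gl1 _ _ hGl1 h1. rewrite /be; lra.
  have hlt : be * t < rho.
    have := Rmult_lt_compat_l (be + 1) _ _ (ltac:(lra)) ht3.
    replace ((be + 1) * (rho / (be + 1))) with rho by (field; lra).
    nra.
  have := Hr (step (dm d) (sent W n.+2 j k0 t) n.+2 a) (Rle_lt_trans _ _ _ hsd2 hlt).
  move=> h; apply: Rle_trans h _.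
  apply: Rle_trans (_ : K * (be * t) <= _).
    apply: Rmult_le_compat_l => //; exact: hsd2.
  rewrite /be; lra.
-
  have hOc := @Omega_change d W (sent W n.+2 j k0 t) n.+2 k0 (ltac:(lia)) hk0.
  have hOc2 := hOc (ltac:(move=> l k hl hk hne i hi; rewrite /sent; case: ifP => // /andP [/andP [/eqP e1 _] /eqP e2]; by exfalso; apply: hne; rewrite e1 e2)).
  have hsh := @normc_shrink p (dm d n.+1) (fun i => W n.+2 i k0) (fun i => sent W n.+2 j k0 t n.+2 i k0) j t Hp hj hw ht
     (ltac:(move=> i hi hij; rewrite /sent eqxx /=; case: eqP => //=)) (ltac:(by rewrite /sent !eqxx)).
  change (normc p (dm d n.+1) (fun i => W n.+2 i k0)) with (fanin_pnorm p (dm d) W n.+2 k0) in hsh.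
  change (normc p (dm d n.+1) (fun i => sent W n.+2 j k0 t n.+2 i k0)) with (fanin_pnorm p (dm d) (sent W n.+2 j k0 t) n.+2 k0) in hsh.
  set Nk := fanin_pnorm p (dm d) W n.+2 k0 in hOc2 hsh *.
  set Nk' := fanin_pnorm p (dm d) (sent W n.+2 j k0 t) n.+2 k0 in hOc2 hsh *.
  set P := Rpower Nk (p - 1) in hsh *.
  have hP : 0 < P := Rpower_pos _ _.
  have h1 : lambda * (t * Rpower (Rabs w) p / (p * P)) <= K * Gl1 * b1l * Xp * N * Rabs w * t.
    change (W n.+2 j k0) with w in hsh. have := Rmult_le_compat_l lambda _ _ (ltac:(lra)) hsh. lra.
  have hU : Rpower (Rabs w) p = Rpower (Rabs w) (p - 1) * Rabs w.
    rewrite -[X in _ = _ * X](Rpower_1 (Rabs w)) // -Rpower_plus; f_equal; ring.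
  rewrite hU in h1.
  set V := Rpower (Rabs w) (p - 1) in h1 *.
  have hpP : 0 < p * P by apply: Rmult_lt_0_compat; lra.
  have h2 := Rmult_le_compat_l (p * P) _ _ (ltac:(lra)) h1.
  replace (p * P * (lambda * (t * (V * Rabs w) / (p * P)))) with ((lambda * V) * (Rabs w * t)) in h2 by (field; lra).
  have hut : 0 < Rabs w * t by apply: Rmult_lt_0_compat; lra.
  apply: (Rmult_le_reg_r (Rabs w * t)) => //.
  apply: Rle_trans h2 _; right; ring.
Qed.

Lemma dm_hidden d n : (n.+2 <= L)%N -> dm d n.+1 = d n.+1.
Proof. move=> h; rewrite /dim /=; case: eqP => // he; lia. Qed.

Lemma unit_bound n : (n.+2 <= L)%N -> exists c, 0 < c /\ forall d W,
  @proper_B_local_min Y sigma d0 dL L e D lambda p B d W ->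
  forall j, (j < dm d n.+1)%N -> c <= fanin_pnorm p (dm d) W n.+1 j.
Proof.
move=> hn.
have [Ca [hCa HA]] := part_a n hn.
have [Cb [hCb HB]] := part_b n hn.
have hBL := BL_ge0.
set eps := lambda / (Ca * BL + 1).
have hCB : 0 <= Ca * BL by apply: Rmult_le_pos.
have heps : 0 < eps by apply: Rdiv_lt_0_compat; lra.
set E := Rpower eps (p - 1).
have hE : 0 < E := Rpower_pos _ _.
have hc : 0 < lambda * E / (p * (Cb + 1)).
  apply: Rdiv_lt_0_compat; first by apply: Rmult_lt_0_compat.
  apply: Rmult_lt_0_compat; lra.
exists (lambda * E / (p * (Cb + 1))); split => //.
move=> d W hP j hj.
case: (Rle_lt_dec (lambda * E / (p * (Cb + 1))) (fanin_pnorm p (dm d) W n.+1 j)) => // hlt.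
exfalso.
have [hlm [hEB hprop]] := hP.
have [hbud hlb hsumN hent] := good_facts d W hEB.
set N := fanin_pnorm p (dm d) W n.+1 j in hlt.
have hN0 : 0 <= N := rpow_ge0 _ _.
have [[i [hi hWi]] _] := hprop n.+1 j (ltac:(apply/andP; split => //; lia)) (ltac:(by rewrite -(dm_hidden d n hn))).
have hNp : 0 < N.
  have := hent n.+1 i j hi; rewrite -/N; have := Rabs_pos_lt _ hWi; lra.
have hA := HA d W hP j hj hNp.
have hpCbN : p * Cb * N < lambda * E.
  have h1 : p * Cb * N <= p * Cb * (lambda * E / (p * (Cb + 1))).
    apply: Rmult_le_compat_l; [apply: Rmult_le_pos; lra | lra].
  apply: Rle_lt_trans h1 _.
  replace (p * Cb * (lambda * E / (p * (Cb + 1)))) with ((lambda * E) * (Cb / (Cb + 1))) by (field; lra).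
  have : Cb / (Cb + 1) < 1.
    apply: (Rmult_lt_reg_r (Cb + 1)); first lra.
    replace (Cb / (Cb + 1) * (Cb + 1)) with Cb by (field; lra). lra.
  have := Rmult_lt_0_compat _ _ Hlambda hE. nra.
have hk : forall k, (k < dm d n.+2)%N -> Rabs (W n.+2 j k) <= eps * fanin_pnorm p (dm d) W n.+2 k.
  move=> k hk.
  have hNk0 : 0 <= fanin_pnorm p (dm d) W n.+2 k := rpow_ge0 _ _.
  case: (Req_dec (W n.+2 j k) 0) => [->|hw]; first by rewrite Rabs_R0; apply: Rmult_le_pos; lra.
  case: (Rle_lt_dec (Rabs (W n.+2 j k)) (eps * fanin_pnorm p (dm d) W n.+2 k)) => // hgt; exfalso.
  have hwN : Rabs (W n.+2 j k) <= fanin_pnorm p (dm d) W n.+2 k by apply: hent.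
  have hu := Rabs_pos_lt _ hw.
  set Nk := fanin_pnorm p (dm d) W n.+2 k in hgt hwN hNk0.
  have hNk : 0 < Nk.
    case: (Req_dec Nk 0) => h0; last lra.
    rewrite h0 in hwN; lra.
  have hB := HB d W hP j k hj hk hw.
  rewrite -/Nk -/N in hB.
  have hmono : Rpower (eps * Nk) (p - 1) <= Rpower (Rabs (W n.+2 j k)) (p - 1).
    apply: Rle_Rpower_l; first lra.
    split; [apply: Rmult_lt_0_compat => // | lra].
  rewrite -Rpower_mult_distr // -/E in hmono.
  have hPk : 0 < Rpower Nk (p - 1) := Rpower_pos _ _.
  have h3 : lambda * E * Rpower Nk (p - 1) <= p * Cb * N * Rpower Nk (p - 1).
    apply: Rle_trans hB; rewrite Rmult_assoc; apply: Rmult_le_compat_l; lra.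
  have h4 := Rmult_le_reg_r _ _ _ hPk h3.
  lra.
have hR : \big[Rplus/0]_(k < dm d n.+2) Rabs (W n.+2 j k) <= eps * BL.
  apply: Rle_trans (_ : \big[Rplus/0]_(k < dm d n.+2) (eps * fanin_pnorm p (dm d) W n.+2 k) <= _).
    apply: sum_le => k _; exact: hk (ltn_ord k).
  rewrite sumZ; apply: Rmult_le_compat_l; first lra.
  apply: hsumN; lia.
have : lambda <= Ca * (eps * BL) by apply: Rle_trans hA _; apply: Rmult_le_compat_l.
replace (Ca * (eps * BL)) with (lambda * (Ca * BL / (Ca * BL + 1))) by (rewrite /eps; field; lra).
have : Ca * BL / (Ca * BL + 1) < 1.
  apply: (Rmult_lt_reg_r (Ca * BL + 1)); first lra.
  replace (Ca * BL / (Ca * BL + 1) * (Ca * BL + 1)) with (Ca * BL) by (field; lra). lra.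
nra.
Qed.

Lemma nat_arch r : exists M : nat, r <= INR M.
Proof.
have [h1 _] := archimed r.
case: (Z_lt_le_dec (up r) 0) => h.
- exists 0%nat; simpl. have := IZR_lt _ _ h. lra.
- exists (Z.to_nat (up r)). rewrite INR_IZR_INZ Z2Nat.id //. lra.
Qed.

Lemma layer_bound n : (n.+2 <= L)%N -> exists M : nat, forall d W,
  @proper_B_local_min Y sigma d0 dL L e D lambda p B d W -> (d n.+1 <= M)%N.
Proof.
move=> hn.
have [c [hc H]] := unit_bound n hn.
have [M hM] := nat_arch (BL / c).
exists M => d W hP.
have [hlm [hEB hprop]] := hP.
have [hbud hlb hsumN hent] := good_facts d W hEB.
have hs := hsumN n.+1 (ltac:(apply/andP; split => //; lia)).
have h1 : \big[Rplus/0]_(j < dm d n.+1) c <= \big[Rplus/0]_(j < dm d n.+1) fanin_pnorm p (dm d) W n.+1 j.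
  apply: sum_le => j _; exact: H hP j (ltn_ord j).
rewrite sum_const_ord (dm_hidden d n hn) in h1.
have h2 : INR (d n.+1) * c <= BL.
  apply: Rle_trans h1 _; rewrite -(dm_hidden d n hn); exact: hs.
have h3 : INR (d n.+1) <= BL / c.
  apply: (Rmult_le_reg_r c) => //; replace (BL / c * c) with BL by (field; lra); lra.
apply/leP; apply: INR_le; lra.
Qed.

Lemma all_layers m : exists M : nat, forall n, (n < m)%N -> (n.+2 <= L)%N -> forall d W,
  @proper_B_local_min Y sigma d0 dL L e D lambda p B d W -> (d n.+1 <= M)%N.
Proof.
elim: m => [|m [M1 H1]]; first by exists 0%N.
case: (leqP m.+2 L) => hm.
- have [M2 H2] := layer_bound m hm.
  exists (M1 + M2)%N => n hn hnL d W hP.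
  case: (ltngtP n m) => hnm.
  + have := H1 n hnm hnL d W hP; lia.
  + lia.
  + subst n; have := H2 d W hP; lia.
- exists M1 => n hn hnL d W hP.
  apply: (H1 n _ hnL d W hP); lia.
Qed.

Lemma main_sec : exists M : nat,
    forall (d : nat -> nat) (W : nat -> nat -> nat -> R),
      @proper_B_local_min Y sigma d0 dL L e D lambda p B d W ->
      forall l, (1 <= l <= L.-1)%N -> (d l <= M)%N.
Proof.
have [M H] := all_layers L.
exists M => d W hP l hl.
case: l hl => [|n] hl //.
have hL2 : (n.+2 <= L)%N by move: hl HL => /andP [_ h1] h2; rewrite -(prednK h2) ltnS.
exact: (H n (ltnW hL2) hL2 d W hP).
Qed.

End Net.

Close Scope R_scope.

Theorem lemma2
  (L d0 dL : nat) (HL : (1 <= L)%N)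
  (sigma : nat -> R -> R)
  (* standing assumptions on the activations *)
  (sigl sigr : nat -> R -> R)
  (Hsigl : forall l s, (1 <= l <= L)%N -> left_deriv (sigma l) s (sigl l s))
  (Hsigr : forall l s, (1 <= l <= L)%N -> right_deriv (sigma l) s (sigr l s))
  (b1 b2 : nat -> R -> R)
  (Hb1nn : forall l T, (0 <= T)%R -> (0 <= b1 l T)%R)
  (Hb2nn : forall l T, (0 <= T)%R -> (0 <= b2 l T)%R)
  (Hb1 : forall l T s, (1 <= l <= L)%N -> (0 <= T)%R -> (Rabs s <= T)%R ->
           (Rabs (sigma l s) <= b1 l T * Rabs s)%R)
  (Hb2 : forall l T s, (1 <= l <= L)%N -> (0 <= T)%R -> (Rabs s <= T)%R ->
           (Rabs (sigl l s) <= b2 l T)%R /\ (Rabs (sigr l s) <= b2 l T)%R)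
  (* additional assumption: every sigma_l is differentiable everywhere *)
  (Hdiff : forall l s, (1 <= l <= L)%N -> exists g, derivable_pt_lim (sigma l) s g)
  (* standing assumptions on the loss *)
  (Y : Type) (e : ('I_dL -> R) -> Y -> R)
  (Hpos : forall v y, (0 <= e v y)%R)
  (b3 : R -> R) (Hb3nn : forall T, (0 <= T)%R -> (0 <= b3 T)%R)
  (grad_e : ('I_dL -> R) -> Y -> 'I_dL -> R)
  (Hgrad : forall v y, frechet_grad (fun u => e u y) v (grad_e v y))
  (Hb3 : forall v y T, (0 <= T)%R -> (e v y <= T)%R ->
           (supnorm (grad_e v y) <= b3 T)%R)
  (* dataset and regularization Omega = Omega_in *)
  (D : seq (('I_d0 -> R) * Y))
  (lambda p : R) (Hlambda : (0 < lambda)%R) (Hp : (1 <= p)%R)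
  (B : R) :
  exists M : nat,
    forall (d : nat -> nat) (W : nat -> nat -> nat -> R),
      @proper_B_local_min Y sigma d0 dL L e D lambda p B d W ->
      forall l, (1 <= l <= L.-1)%N -> (d l <= M)%N.
Proof.
exact: (@main_sec L d0 dL HL sigma sigr b1 b2 Hsigr Hb1nn Hb2nn Hb1
  (fun l T s h1 h2 h3 => proj2 (Hb2 l T s h1 h2 h3)) Hdiff Y e Hpos b3 Hb3nn grad_e Hgrad Hb3
  D lambda p Hlambda Hp B).
Qed.
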